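(* Let $\mathcal{H}_A$, $\mathcal{H}_B$, $\mathcal{H}_{B'}$ be finite-dimensional Hilbert spaces, let $\rho_{AB}$ be a quantum state on $\mathcal{H}_A\otimes\mathcal{H}_B$, let $\epsilon\ge 0$, and let $\mathcal{F}$ be a trace-preserving completely positive map from system $B$ to system $B'$. Then $$\bar{R}_\epsilon(A|B)_{\rho}\le \bar{R}_\epsilon(A|B')_{\mathcal{F}(\rho)},$$ where $\mathcal{F}(\rho)$ denotes the state $(\mathrm{id}_A\otimes\mathcal{F})(\rho_{AB})$ on $\mathcal{H}_A\otimes\mathcal{H}_{B'}$.
   Context: All Hilbert spaces are finite-dimensional. For a Hermitian operator $X=\sum_i\lambda_iE_i$ (spectral decomposition), $\{X\le 0\}=\sum_{i:\lambda_i\le 0}E_i$ denotes the projection onto the nonpositive eigenspace; $\{X\ge0\}$ etc. are defined analogously. Logarithms are base 2. For a state $\rho_{AB}$ on $\mathcal{H}_A\otimes\mathcal{H}_B$ with marginal $\rho_B=\mathrm{Tr}_A\rho_{AB}$, set $\rho^{(2)}_B=\mathrm{Tr}_A[\rho_{AB}^2]$. For $\epsilon\ge0$, the information spectrum collision entropy is $$R_\epsilon(A|B)_\rho=\sup\big\{\lambda : \mathrm{Tr}\big[\{\rho^{(2)}_B-2^{-\lambda}\rho_B^2\le 0\}\rho_B\big]\ge 1-\epsilon\big\},$$ and the version with optimal side information is $$\bar{R}_\epsilon(A|B)_\rho=\sup_{\mathcal{H}_C,\ \rho_{ABC}:\ \mathrm{Tr}_C[\rho_{ABC}]=\rho_{AB}}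 R_\epsilon(A|BC)_\rho,$$ the supremum over all Hilbert spaces $\mathcal{H}_C$ and states $\rho_{ABC}$ on $\mathcal{H}_A\otimes\mathcal{H}_B\otimes\mathcal{H}_C$ extending $\rho_{AB}$, where $R_\epsilon(A|BC)_\rho$ is $R_\epsilon$ with $B$ replaced by the composite system $BC$ (so $\rho^{(2)}_{BC}=\mathrm{Tr}_A[\rho_{ABC}^2]$). *)

(* Defs.v *)
From HB Require Import structures.
From mathcomp Require Import all_boot all_order all_algebra.
From mathcomp Require Import complex.
From mathcomp Require Import classical_sets reals ereal exp.
Set Implicit Arguments. Unset Strict Implicit. Unset Printing Implicit Defensive.
Import Order.TTheory GRing.Theory Num.Theory Num.Def.
Local Open Scope ring_scope.
Local Open Scope classical_set_scope.

Section QDefs.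
Variable R : realType.
Local Notation C := (R[i]).

(* index of the basis vector |i> (x) |j> in H_m (x) H_n *)
Definition tidx (m n : nat) (i : 'I_m) (j : 'I_n) : 'I_(m * n) := mxvec_index i j.
Definition untidx (m n : nat) (k : 'I_(m * n)) : 'I_m * 'I_n :=
  enum_val (cast_ord (esym (@mxvec_cast m n)) k).

Definition adj (m n : nat) (M : 'M[C]_(m, n)) : 'M[C]_(n, m) := map_mx conjC (M^T).

Definition psd (n : nat) (M : 'M[C]_n) : Prop :=
  adj M = M /\ forall v : 'rV[C]_n, 0 <= (v *m M *m adj v) 0 0.

Definition is_state (n : nat) (M : 'M[C]_n) : Prop := psd M /\ \tr M = 1.

Definition ptr1 (m n : nat) (M : 'M[C]_(m * n)) : 'M[C]_n :=
  \matrix_(j, j') \sum_(i < m) M (tidx i j) (tidx i j').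

(* partial trace over the last factor C of A (x) (B (x) C), giving an operator on A (x) B *)
Definition ptr3 (a b c : nat) (M : 'M[C]_(a * (b * c))) : 'M[C]_(a * b) :=
  \matrix_(k, k') \sum_(z < c)
     M (tidx (untidx k).1 (tidx (untidx k).2 z)) (tidx (untidx k').1 (tidx (untidx k').2 z)).

(* spectral projection {X <= 0} onto the nonpositive eigenspace of X (X Hermitian),
   computed from the spectral decomposition X = P^-1 diag(d) P with P unitary *)
Definition nonpos_proj (n : nat) (X : 'M[C]_n) : 'M[C]_n :=
  invmx (spectralmx X) *m
  diag_mx (\row_i (if spectral_diag X 0 i <= 0 then (1 : C) else 0)) *m spectralmx X.

(* information spectrum collision entropy R_eps(B'|B) for rho on H_a (x) H_b
   (the first factor is the system "A") *)
Definition Reps (a b : nat) (rho : 'M[C]_(a * b)) (eps : R) : \bar R :=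
  let rhoB := ptr1 rho in
  let rho2B := ptr1 (rho *m rho) in
  ereal_sup ((fun l : R => l%:E) @`
    [set l : R | 1 - eps <=
       complex.Re (\tr (nonpos_proj (rho2B - (real_complex R (2 `^ (- l))) *: (rhoB *m rhoB)) *m rhoB))]).

Definition Rbar (a b : nat) (rho : 'M[C]_(a * b)) (eps : R) : \bar R :=
  ereal_sup [set r | exists (c : nat) (rhoABC : 'M[C]_(a * (b * c))),
     [/\ is_state rhoABC, ptr3 rhoABC = rho & r = Reps rhoABC eps]].

Definition id_tensor (k b b' : nat) (F : 'M[C]_b -> 'M[C]_b') (M : 'M[C]_(k * b))
  : 'M[C]_(k * b') :=
  \matrix_(r, s) F (\matrix_(y, y') M (tidx (untidx r).1 y) (tidx (untidx s).1 y'))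
                   (untidx r).2 (untidx s).2.

Definition completely_positive (b b' : nat) (F : 'M[C]_b -> 'M[C]_b') : Prop :=
  forall (k : nat) (M : 'M[C]_(k * b)), psd M -> psd (id_tensor F M).

Definition trace_preserving (b b' : nat) (F : 'M[C]_b -> 'M[C]_b') : Prop :=
  forall M : 'M[C]_b, \tr (F M) = \tr M.

End QDefs.

(* Main.v *)
Require Import Defs.
From HB Require Import structures.
From mathcomp Require Import all_boot all_order all_algebra.
From mathcomp Require Import complex.
From mathcomp Require Import classical_sets reals ereal exp.
From mathcomp Require Import sesquilinear spectral.
Set Implicit Arguments. Unset Strict Implicit. Unset Printing Implicit Defensive.
Import Order.TTheory GRing.Theory Num.Theory.
Local Open Scope ring_scope.
Section P1.
Variable R : realType.
Local Notation C := (R[i]).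

Lemma untidxK m n (i : 'I_m) (j : 'I_n) : untidx (tidx i j) = (i, j).
Proof. by rewrite /untidx /tidx /mxvec_index cast_ordK enum_rankK. Qed.

Lemma tidxK m n (k : 'I_(m * n)) : tidx (untidx k).1 (untidx k).2 = k.
Proof. by rewrite /untidx /tidx /mxvec_index -surjective_pairing enum_valK cast_ordKV. Qed.

Lemma untidx1 m n (i : 'I_m) (j : 'I_n) : (untidx (tidx i j)).1 = i.
Proof. by rewrite untidxK. Qed.
Lemma untidx2 m n (i : 'I_m) (j : 'I_n) : (untidx (tidx i j)).2 = j.
Proof. by rewrite untidxK. Qed.

Lemma tidx_eq m n (i i' : 'I_m) (j j' : 'I_n) :
  (tidx i j == tidx i' j') = (i == i') && (j == j').
Proof.
apply/eqP/andP => [E|[/eqP-> /eqP->]//].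
have := congr1 (@untidx m n) E; rewrite !untidxK => -[-> ->]; by split.
Qed.

Lemma sum_tidx m n (f : 'I_(m * n) -> C) :
  \sum_k f k = \sum_i \sum_j f (tidx i j).
Proof.
rewrite pair_bigA /=.
rewrite (reindex (fun p : 'I_m * 'I_n => tidx p.1 p.2)) /=; first by [].
exists (@untidx m n) => [p _|k _]; first by rewrite untidxK -surjective_pairing.
by rewrite tidxK.
Qed.

Definition adjC m n (M : 'M[C]_(m, n)) := adj M.

Lemma adjE m n (M : 'M[C]_(m, n)) i j : adj M i j = (M j i)^*.
Proof. by rewrite /adj !mxE. Qed.

Lemma adjK m n (M : 'M[C]_(m, n)) : adj (adj M) = M.
Proof. by apply/matrixP => i j; rewrite !adjE conjCK. Qed.

Lemma adjM m n p (A : 'M[C]_(m, n)) (B : 'M[C]_(n, p)) :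
  adj (A *m B) = adj B *m adj A.
Proof.
apply/matrixP => i j; rewrite adjE !mxE rmorph_sum; apply: eq_bigr => k _.
by rewrite !adjE rmorphM mulrC.
Qed.

Lemma adjD m n (A B : 'M[C]_(m, n)) : adj (A + B) = adj A + adj B.
Proof. by apply/matrixP => i j; rewrite /adj !mxE rmorphD. Qed.

Lemma adjB m n (A B : 'M[C]_(m, n)) : adj (A - B) = adj A - adj B.
Proof. by apply/matrixP => i j; rewrite /adj !mxE rmorphB. Qed.

Lemma adjZ m n a (A : 'M[C]_(m, n)) : adj (a *: A) = a^* *: adj A.
Proof. by apply/matrixP => i j; rewrite /adj !mxE rmorphM. Qed.

Lemma adj1 n : adj (1%:M : 'M[C]_n) = 1%:M.
Proof. by apply/matrixP => i j; rewrite adjE !mxE eq_sym; case: (i == j); rewrite ?conjC1 ?conjC0. Qed.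

Lemma adj_sum I (r : seq I) (P : pred I) m n (F : I -> 'M[C]_(m, n)) :
  adj (\sum_(i <- r | P i) F i) = \sum_(i <- r | P i) adj (F i).
Proof.
apply/matrixP => i j; rewrite adjE !summxE rmorph_sum; apply: eq_bigr => k _.
by rewrite adjE.
Qed.

Lemma tr_adj n (M : 'M[C]_n) : \tr (adj M) = (\tr M)^*.
Proof. by rewrite /mxtrace rmorph_sum; apply: eq_bigr => i _; rewrite adjE. Qed.

Lemma herm_normal n (X : 'M[C]_n) : adj X = X -> X \is normalmx.
Proof. by move=> h; apply/normalmxP; move: h; rewrite /adj => ->. Qed.

Lemma sum_delta_l n (i : 'I_n) (f : 'I_n -> C) :
  \sum_j (j == i)%:R * f j = f i.
Proof.
rewrite (bigD1 i) //= eqxx mul1r big1 ?addr0 // => j /negPf ->; by rewrite mul0r.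
Qed.

Lemma sum_delta_r n (i : 'I_n) (f : 'I_n -> C) :
  \sum_j f j * (j == i)%:R = f i.
Proof. by rewrite -[RHS](sum_delta_l i); apply: eq_bigr => j _; rewrite mulrC. Qed.

End P1.

Section P2.
Variable R : realType.
Local Notation C := (R[i]).

Definition mpow n (X : 'M[C]_n) k := iter k (mulmx X) 1%:M.
Definition pe n (q : {poly C}) (X : 'M[C]_n) := \sum_(i < size q) q`_i *: mpow X i.

Lemma mpow_conj m n (W : 'M[C]_(m, n)) (W' : 'M[C]_(n, m)) (Y : 'M[C]_n) k :
  W' *m W = 1%:M -> W' *m mpow (W *m Y *m W') k *m W = mpow Y k.
Proof.
move=> WW; elim: k => [|k IH]; first by rewrite /mpow /= mulmx1.
have E : forall Z : 'M[C]_n, mpow Z k.+1 = Z *m mpow Z k by [].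
have E' : forall Z : 'M[C]_m, mpow Z k.+1 = Z *m mpow Z k by [].
by rewrite E E' -IH !mulmxA WW mul1mx.
Qed.

Lemma pe_conj m n (W : 'M[C]_(m, n)) (W' : 'M[C]_(n, m)) (Y : 'M[C]_n) q :
  W' *m W = 1%:M -> W' *m pe q (W *m Y *m W') *m W = pe q Y.
Proof.
move=> WW; rewrite /pe mulmx_sumr mulmx_suml; apply: eq_bigr => i _.
by rewrite -scalemxAr -scalemxAl mpow_conj.
Qed.

Lemma mpow_diag n (d : 'rV[C]_n) k :
  mpow (diag_mx d) k = diag_mx (\row_i (d 0 i ^+ k)).
Proof.
elim: k => [|k IH].
  by apply/matrixP => i j; rewrite /mpow /= !mxE expr0.
have -> : mpow (diag_mx d) k.+1 = diag_mx d *m mpow (diag_mx d) k by [].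
rewrite IH mulmx_diag; congr diag_mx.
by apply/rowP => i; rewrite !mxE exprS.
Qed.

Lemma pe_diag n (d : 'rV[C]_n) q :
  pe q (diag_mx d) = diag_mx (\row_i q.[d 0 i]).
Proof.
apply/matrixP => i j; rewrite /pe summxE !mxE.
under eq_bigr do rewrite mpow_diag !mxE.
rewrite horner_coef -sumrMnl; apply: eq_bigr => k _.
by rewrite mulrnAr.
Qed.

Lemma interp (s : seq C) (f : C -> C) :
  exists q : {poly C}, forall x, x \in s -> q.[x] = f x.
Proof.
elim: s => [|a s [q Hq]]; first by exists 0.
have [ain|anin] := boolP (a \in s).
  by exists q => x; rewrite inE => /orP[/eqP->|]; [exact: Hq|exact: Hq].
pose r := \prod_(x <- s) ('X - x%:P).
have r0 : forall x, x \in s -> r.[x] = 0.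
  move=> x xs; apply/rootP; rewrite root_prod_XsubC; exact: xs.
have ra : r.[a] != 0.
  by rewrite -/(root r a) root_prod_XsubC.
exists (q + ((f a - q.[a]) / r.[a]) *: r) => x; rewrite inE => /orP[/eqP->|xs].
  by rewrite hornerD hornerZ -mulrA mulVf // mulr1 addrC subrK.
by rewrite hornerD hornerZ (r0 x xs) mulr0 addr0 Hq.
Qed.

Definition ind0 (x : C) : C := if x <= 0 then 1 else 0.

Lemma nonpos_proj_pe n (X : 'M[C]_n) q :
  X \is normalmx ->
  (forall i, q.[spectral_diag X 0 i] = ind0 (spectral_diag X 0 i)) ->
  nonpos_proj X = pe q X.
Proof.
move=> /orthomx_spectralP XE Hq.
set P := spectralmx X in XE *; set d := spectral_diag X in XE Hq *.
have Pu : P \in unitmx by exact: spectral_unit.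
have PP : P *m invmx P = 1%:M by rewrite mulmxV.
have := pe_conj (W := invmx P) (W' := P) (diag_mx d) q PP.
rewrite -XE pe_diag => E.
have -> : pe q X = invmx P *m (P *m pe q X *m invmx P) *m P.
  by rewrite !mulmxA mulVmx // mul1mx -mulmxA mulVmx // mulmx1.
rewrite E /nonpos_proj -/P; congr (_ *m diag_mx _ *m _).
by apply/rowP => i; rewrite !mxE Hq.
Qed.

Lemma key_proj m n (W : 'M[C]_(m, n)) (X : 'M[C]_n) :
  adj W *m W = 1%:M -> adj X = X ->
  adj W *m nonpos_proj (W *m X *m adj W) *m W = nonpos_proj X.
Proof.
move=> WW hX.
have hX' : adj (W *m X *m adj W) = W *m X *m adj W.
  by rewrite !adjM adjK hX mulmxA.
pose s := [seq spectral_diag X 0 i | i <- enum 'I_n] ++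
          [seq spectral_diag (W *m X *m adj W) 0 i | i <- enum 'I_m].
have [q Hq] := interp s ind0.
rewrite (nonpos_proj_pe (q := q) (herm_normal hX')); last first.
  by move=> i; apply: Hq; rewrite mem_cat; apply/orP; right; apply: map_f; rewrite mem_enum.
rewrite (nonpos_proj_pe (q := q) (herm_normal hX)); last first.
  by move=> i; apply: Hq; rewrite mem_cat; apply/orP; left; apply: map_f; rewrite mem_enum.
exact: pe_conj.
Qed.

End P2.

Section P3.
Variable R : realType.
Local Notation C := (R[i]).

Definition liftA a p q (W : 'M[C]_(p, q)) : 'M[C]_(a * p, a * q) :=
  \matrix_(r, s) (((untidx r).1 == (untidx s).1)%:R * W (untidx r).2 (untidx s).2).

Lemma liftAE a p q (W : 'M[C]_(p, q)) i j i' j' :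
  liftA a W (tidx i j) (tidx i' j') = (i == i')%:R * W j j'.
Proof. by rewrite /liftA mxE !untidxK. Qed.

Lemma liftA_mull a p q r (W : 'M[C]_(p, q)) (M : 'M[C]_(a * q, r)) i j s :
  (liftA a W *m M) (tidx i j) s = \sum_b W j b * M (tidx i b) s.
Proof.
rewrite mxE sum_tidx (bigD1 i) //= [X in _ + X]big1 ?addr0.
  by apply: eq_bigr => b _; rewrite liftAE eqxx mul1r.
move=> i' /negPf ne; apply: big1 => b _; by rewrite liftAE eq_sym ne !mul0r.
Qed.

Lemma liftA_mulr a p q r (W : 'M[C]_(p, q)) (M : 'M[C]_(r, a * p)) s i j :
  (M *m liftA a W) s (tidx i j) = \sum_b M s (tidx i b) * W b j.
Proof.
rewrite mxE sum_tidx (bigD1 i) //= [X in _ + X]big1 ?addr0.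
  by apply: eq_bigr => b _; rewrite liftAE eqxx mul1r.
move=> i' /negPf ne; apply: big1 => b _; by rewrite liftAE ne !mul0r mulr0.
Qed.

Lemma liftA_mul a p q r (W1 : 'M[C]_(p, q)) (W2 : 'M[C]_(q, r)) :
  liftA a W1 *m liftA a W2 = liftA a (W1 *m W2).
Proof.
apply/matrixP => k l; rewrite -[k]tidxK -[l]tidxK liftA_mull liftAE mxE mulr_sumr.
by apply: eq_bigr => b _; rewrite liftAE mulrCA.
Qed.

Lemma liftA1 a p : liftA a (1%:M : 'M[C]_p) = 1%:M.
Proof.
apply/matrixP => k l; rewrite -[k]tidxK -[l]tidxK liftAE !mxE tidx_eq.
set b1 := (_ == _); set b2 := (_ == _).
by case: b1; case: b2; rewrite /= ?mulr1n ?mulr0n ?mul1r ?mul0r.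
Qed.

Lemma liftA_adj a p q (W : 'M[C]_(p, q)) : adj (liftA a W) = liftA a (adj W).
Proof.
apply/matrixP => k l; rewrite -[k]tidxK -[l]tidxK adjE !liftAE adjE rmorphM.
rewrite eq_sym; set b := (_ == _).
by case: b; rewrite /= ?mulr1n ?mulr0n ?conjC1 ?conjC0.
Qed.

Lemma ptr1_lift a p q (W : 'M[C]_(p, q)) (V : 'M[C]_(q, p)) (M : 'M[C]_(a * q)) :
  ptr1 (liftA a W *m M *m liftA a V) = W *m ptr1 M *m V.
Proof.
apply/matrixP => j j'; rewrite /ptr1 !mxE.
under eq_bigr do rewrite liftA_mulr.
under eq_bigr do under eq_bigr do rewrite liftA_mull.
under [RHS]eq_bigr do rewrite mxE.
under [RHS]eq_bigr do under eq_bigr do rewrite mxE.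
rewrite [LHS](exchange_big (R := C)) /=; apply: eq_bigr => b' _.
under eq_bigr do rewrite mulr_suml.
rewrite exchange_big /= mulr_suml; apply: eq_bigr => b _.
rewrite mulr_sumr mulr_suml; apply: eq_bigr => i _.
by [].

Qed.

Lemma psd_conj m n (W : 'M[C]_(m, n)) (M : 'M[C]_n) :
  psd M -> psd (W *m M *m adj W).
Proof.
move=> [hM pM]; split; first by rewrite !adjM adjK hM mulmxA.
move=> v; have -> : v *m (W *m M *m adj W) *m adj v = (v *m W) *m M *m adj (v *m W).
  by rewrite adjM !mulmxA.
exact: pM.
Qed.

Lemma tr_conj m n (W : 'M[C]_(m, n)) (M : 'M[C]_n) :
  adj W *m W = 1%:M -> \tr (W *m M *m adj W) = \tr M.
Proof. by move=> WW; rewrite mxtrace_mulC mulmxA WW mul1mx. Qed.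

End P3.

Section P4.
Variable R : realType.
Local Notation C := (R[i]).

Lemma lin_facts m n (F : 'M[C]_m -> 'M[C]_n) : linear F ->
  [/\ F 0 = 0, forall x y, F (x + y) = F x + F y & forall (a : C) x, F (a *: x) = a *: F x].
Proof.
move=> hF.
have F0 : F 0 = 0.
  have := hF 1 0 0; rewrite !scale1r addr0 => E.
  have := congr1 (fun z => z - F 0) E; rewrite /= subrr addrK.
  by move=> ->.
split => //.
  by move=> x y; have := hF 1 x y; rewrite !scale1r.
by move=> a x; have := hF a x 0; rewrite !addr0 F0 addr0.
Qed.

Lemma lin_sum m n (F : 'M[C]_m -> 'M[C]_n) I (r : seq I) (P : pred I) (G : I -> 'M[C]_m) :
  linear F -> F (\sum_(i <- r | P i) G i) = \sum_(i <- r | P i) F (G i).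
Proof.
move=> /lin_facts [F0 FD _].
by apply: (big_morph F FD F0).
Qed.

Definition Omega n : 'M[C]_(n * n) :=
  \matrix_(r, s) (((untidx r).1 == (untidx r).2)%:R * ((untidx s).1 == (untidx s).2)%:R).

Lemma psd_Omega n : psd (Omega n).
Proof.
pose u : 'rV[C]_(n * n) := \row_s ((untidx s).1 == (untidx s).2)%:R.
have Ou : Omega n = adj u *m u.
  apply/matrixP => r s; rewrite !mxE big_ord1 adjE !mxE conjC_nat.
  by [].
rewrite Ou; split; first by rewrite adjM adjK.
move=> v; rewrite !mulmxA -(mulmxA (v *m adj u)).
have -> : u *m adj v = adj (v *m adj u) by rewrite adjM adjK.
rewrite mxE big_ord1 adjE; exact: mul_conjC_ge0.
Qed.

Lemma Omega_F b b' (F : 'M[C]_b -> 'M[C]_b') i y i' y' :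
  id_tensor F (Omega b) (tidx i y) (tidx i' y') = F (delta_mx i i') y y'.
Proof.
rewrite /id_tensor mxE !untidxK /=; congr (F _ y y').
apply/matrixP => x x'; rewrite !mxE !untidxK /=.
rewrite (eq_sym i x) (eq_sym i' x').
by case: (x == i); case: (x' == i'); rewrite /= ?mulr1n ?mulr0n ?mul1r ?mul0r.
Qed.

Lemma conj_sqrt_mul (x a b : C) : 0 <= x ->
  (sqrtC x * a)^* * (sqrtC x * b)^*^* = a^* * x * b.
Proof.
move=> x0; rewrite conjCK rmorphM /= (@conj_Creal _ (sqrtC x)); last by apply: ger0_real; rewrite sqrtC_ge0.
by rewrite mulrACA -expr2 sqrtCK mulrA [x * _]mulrC.
Qed.

Lemma kraus (dB dB' : nat) (F : 'M[C]_dB -> 'M[C]_dB') :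
  linear F -> completely_positive F -> trace_preserving F ->
  exists n (K : 'I_n -> 'M[C]_(dB', dB)),
   (forall M, F M = \sum_k K k *m M *m adj (K k)) /\ \sum_k adj (K k) *m K k = 1%:M.
Proof.
move=> hL hCP hTP.
pose J := id_tensor F (Omega dB).
have [hJ pJ] : psd J := hCP dB (Omega dB) (psd_Omega dB).
have /orthomx_spectralP JE := herm_normal hJ.
set P := spectralmx J in JE; set d := spectral_diag J in JE.
have Pu : P \is unitarymx by exact: spectral_unitarymx.
have PA : invmx P = adj P by rewrite invmx_unitary.
have PP : P *m adj P = 1%:M by apply/unitarymxP.
rewrite PA in JE.
have dE : forall k, d 0 k = (row k P *m J *m adj (row k P)) 0 0.
  move=> k.
  have : P *m J *m adj P = diag_mx d by rewrite JE !mulmxA PP mul1mx -mulmxA PP mulmx1.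
  move=> /matrixP /(_ k k); rewrite [diag_mx d k k]mxE eqxx mulr1n => <-.
  rewrite !mxE; apply: eq_bigr => s _.
  by rewrite -row_mul !adjE !mxE.
have d0 : forall k, 0 <= d 0 k by move=> k; rewrite dE; exact: pJ.
pose w k : 'rV[C]_(dB * dB') := sqrtC (d 0 k) *: row k P.
pose K k : 'M[C]_(dB', dB) := \matrix_(y, i) (w k 0 (tidx i y))^*.
have JK : forall i y i' y', J (tidx i y) (tidx i' y') =
    \sum_k K k y i * (K k y' i')^*.
  move=> i y i' y'; rewrite JE mxE; apply: eq_bigr => k _.
  rewrite !mxE (bigD1 k) //= big1 ?addr0; last first.
    by move=> l /negPf lk; rewrite !mxE lk mulr0n mulr0.
  rewrite !mxE eqxx mulr1n.
  by rewrite conj_sqrt_mul.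
have FdE : forall i i' y y', F (delta_mx i i') y y' = \sum_k K k y i * (K k y' i')^*.
  by move=> i i' y y'; rewrite -Omega_F; exact: JK.
exists (dB * dB')%N, K; split.
  move=> M; rewrite {1}(matrix_sum_delta M) lin_sum //.
  apply/matrixP => y y'; rewrite !summxE.
  under eq_bigr do rewrite lin_sum // summxE.
  have [_ _ FZ] := lin_facts hL.
  under eq_bigr do under eq_bigr do rewrite FZ mxE FdE mulr_sumr.
  rewrite exchange_big /=.
  under eq_bigr do rewrite exchange_big /=.
  rewrite exchange_big /=; apply: eq_bigr => k _.
  rewrite mxE; apply: eq_bigr => j _.
  rewrite adjE [(K k *m M) y j]mxE mulr_suml; apply: eq_bigr => i _.
  by rewrite mulrCA mulrA.
apply/matrixP => i' i; rewrite summxE.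
have := hTP (delta_mx i i').
rewrite /mxtrace.
under eq_bigr do rewrite FdE.
rewrite exchange_big /= => E.
have Td : \sum_x (delta_mx i i' : 'M[C]_dB) x x = (i == i')%:R.
  rewrite (bigD1 i) //= !mxE eqxx /= big1 ?addr0 //.
  by move=> x /negPf xi; rewrite mxE xi.
rewrite Td in E; rewrite [1%:M i' i]mxE eq_sym -E.
apply: eq_bigr => k _; rewrite mxE; apply: eq_bigr => y _.
by rewrite adjE mulrC.
Qed.

End P4.

Section P5.
Variable R : realType.
Local Notation C := (R[i]).

Lemma conj_rc (x : R) : (real_complex R x)^* = real_complex R x.
Proof. exact: conjc_real. Qed.

Lemma ptr1_adj m n (M : 'M[C]_(m * n)) : adj (ptr1 M) = ptr1 (adj M).
Proof.
apply/matrixP => j j'; rewrite adjE !mxE rmorph_sum; apply: eq_bigr => i _.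
by rewrite adjE.
Qed.

Lemma Reps_iso a p q (V : 'M[C]_(p, q)) (rho : 'M[C]_(a * q)) eps :
  adj V *m V = 1%:M -> adj rho = rho ->
  Reps (liftA a V *m rho *m adj (liftA a V)) eps = Reps rho eps.
Proof.
move=> VV hr.
rewrite /Reps liftA_adj.
have E1 : ptr1 (liftA a V *m rho *m liftA a (adj V)) = V *m ptr1 rho *m adj V.
  exact: ptr1_lift.
have E2 : ptr1 ((liftA a V *m rho *m liftA a (adj V)) *m (liftA a V *m rho *m liftA a (adj V)))
   = V *m ptr1 (rho *m rho) *m adj V.
  rewrite -ptr1_lift; congr ptr1.
  rewrite !mulmxA -[liftA a V *m rho *m liftA a (adj V) *m liftA a V]mulmxA.
  by rewrite liftA_mul VV liftA1 mulmx1.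
rewrite E1 E2.
congr (ereal_sup (_ @` _)).
apply: boolp.funext => l /=.
set t := real_complex R _.
set A := ptr1 (rho *m rho); set B := ptr1 rho.
have hA : adj A = A by rewrite /A ptr1_adj adjM hr.
have hB : adj B = B by rewrite /B ptr1_adj hr.
have -> : V *m A *m adj V - t *: (V *m B *m adj V *m (V *m B *m adj V))
    = V *m (A - t *: (B *m B)) *m adj V.
  rewrite mulmxBr mulmxBl; congr (_ - _).
  by rewrite -scalemxAr -scalemxAl !mulmxA -(mulmxA _ (adj V) V) VV mulmx1.
have hX : adj (A - t *: (B *m B)) = A - t *: (B *m B).
  by rewrite adjB adjZ adjM hA hB conj_rc.
have -> : \tr (nonpos_proj (V *m (A - t *: (B *m B)) *m adj V) *m (V *m B *m adj V))
   = \tr (adj V *m nonpos_proj (V *m (A - t *: (B *m B)) *m adj V) *m V *m B).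
  by rewrite !mulmxA mxtrace_mulC !mulmxA.
by rewrite key_proj.
Qed.

End P5.

Section P6.
Variable R : realType.
Local Notation C := (R[i]).

Definition Vk dB dB' n c (K : 'I_n -> 'M[C]_(dB', dB)) : 'M[C]_(dB' * (n * c), dB * c) :=
  \matrix_(r, s) (((untidx (untidx r).2).2 == (untidx s).2)%:R *
                  K (untidx (untidx r).2).1 (untidx r).1 (untidx s).1).

Lemma VkE dB dB' n c (K : 'I_n -> 'M[C]_(dB', dB)) y k z b z0 :
  Vk c K (tidx y (tidx k z)) (tidx b z0) = (z == z0)%:R * K k y b.
Proof. by rewrite /Vk mxE !untidxK. Qed.

Lemma Vk_iso dB dB' n c (K : 'I_n -> 'M[C]_(dB', dB)) :
  \sum_k adj (K k) *m K k = 1%:M -> adj (Vk c K) *m Vk c K = 1%:M.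
Proof.
move=> KK; apply/matrixP => s s'; rewrite -[s]tidxK -[s']tidxK.
set b := (untidx s).1; set z0 := (untidx s).2.
set b' := (untidx s').1; set z0' := (untidx s').2.
rewrite mxE sum_tidx.
under eq_bigr do rewrite sum_tidx.
under eq_bigr do under eq_bigr do under eq_bigr do rewrite adjE !VkE.
have -> : (1%:M : 'M[C]_(dB * c)) (tidx b z0) (tidx b' z0') =
    (z0 == z0')%:R * (\sum_k adj (K k) *m K k) b b'.
  rewrite KK !mxE tidx_eq.
  by case: (b == b'); case: (z0 == z0'); rewrite /= ?mulr1n ?mulr0n ?mul1r ?mul0r.
rewrite summxE mulr_sumr exchange_big /=; apply: eq_bigr => k _.
rewrite mxE mulr_sumr; apply: eq_bigr => y _.
rewrite (bigD1 z0) //= [X in _ + X]big1 ?addr0; last first.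
  by move=> z /negPf ->; rewrite mul0r rmorph0 mul0r.
rewrite eqxx mul1r adjE.
by rewrite mulrCA.
Qed.


Lemma sum_collapse m (i : 'I_m) (f : 'I_m -> C) :
  \sum_j (i == j)%:R * f j = f i.
Proof. by rewrite -[RHS](sum_delta_l i); apply: eq_bigr => j _; rewrite eq_sym. Qed.

Lemma sigma_entry a p q (V : 'M[C]_(p, q)) (M : 'M[C]_(a * q)) i r i' r' :
  (liftA a V *m M *m adj (liftA a V)) (tidx i r) (tidx i' r') =
  \sum_b' (\sum_b V r b * M (tidx i b) (tidx i' b')) * (V r' b')^*.
Proof.
rewrite liftA_adj liftA_mulr; apply: eq_bigr => b' _.
by rewrite liftA_mull adjE.
Qed.

Lemma sigma_block dB dB' n c (K : 'I_n -> 'M[C]_(dB', dB)) a (M : 'M[C]_(a * (dB * c)))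
  i y i' y' k z :
  (liftA a (Vk c K) *m M *m adj (liftA a (Vk c K)))
     (tidx i (tidx y (tidx k z))) (tidx i' (tidx y' (tidx k z))) =
  \sum_b' (\sum_b K k y b * M (tidx i (tidx b z)) (tidx i' (tidx b' z))) * (K k y' b')^*.
Proof.
rewrite sigma_entry sum_tidx; apply: eq_bigr => b' _.
under eq_bigr do rewrite VkE rmorphM /= conjC_nat mulrCA.
rewrite sum_collapse; congr (_ * _).
rewrite sum_tidx; apply: eq_bigr => b _.
under eq_bigr do rewrite VkE -mulrA.
by rewrite sum_collapse.
Qed.


Lemma ptr3_sigma dA dB dB' n c (K : 'I_n -> 'M[C]_(dB', dB))
  (F : 'M[C]_dB -> 'M[C]_dB') (rho : 'M[C]_(dA * dB)) (rho3 : 'M[C]_(dA * (dB * c))) :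
  (forall M, F M = \sum_k K k *m M *m adj (K k)) -> ptr3 rho3 = rho ->
  ptr3 (liftA dA (Vk c K) *m rho3 *m adj (liftA dA (Vk c K))) = id_tensor F rho.
Proof.
move=> hK p3; apply/matrixP => r s; rewrite -[r]tidxK -[s]tidxK.
set a := (untidx r).1; set y := (untidx r).2.
set a' := (untidx s).1; set y' := (untidx s).2.
rewrite /ptr3 /id_tensor !mxE !untidxK /= hK summxE sum_tidx.
apply: eq_bigr => k _.
under eq_bigr do rewrite sigma_block.
rewrite mxE exchange_big /=; apply: eq_bigr => b' _.
rewrite -mulr_suml mxE; congr (_ * _).
rewrite exchange_big /=; apply: eq_bigr => b _.
rewrite !mxE -p3 /ptr3 mxE !untidxK /= mulr_sumr.
  by [].
by rewrite adjE.
Qed.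

End P6.

Theorem proposition1 (R : realType) (dA dB dB' : nat)
  (rho : 'M[R[i]]_(dA * dB)) (eps : R)
  (F : 'M[R[i]]_dB -> 'M[R[i]]_dB') :
  is_state rho -> 0 <= eps ->
  linear F -> completely_positive F -> trace_preserving F ->
  (Rbar rho eps <= Rbar (id_tensor F rho) eps)%E.
Proof.
move=> hst heps hL hCP hTP.
have [n [K [hK KK]]] := kraus hL hCP hTP.
apply/ereal_supP => r [c [rho3 [[ps3 tr3] p3 ->]]].
apply: le_ereal_sup_tmp; exists (Reps rho3 eps) => //.
have Viso := Vk_iso c KK.
have Liso : adj (liftA dA (Vk c K)) *m liftA dA (Vk c K) = 1%:M.
  by rewrite liftA_adj liftA_mul Viso liftA1.
exists (n * c)%N, (liftA dA (Vk c K) *m rho3 *m adj (liftA dA (Vk c K))); split.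
- split; first exact: psd_conj.
  by rewrite tr_conj.
- exact: ptr3_sigma.
- by rewrite Reps_iso //; case: ps3.
Qed.
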